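(* Let $\mathbb{F}$ be an infinite field. Let $I,J,K,I',J',K'$ be finite sets, $\Lambda\subseteq I\times J\times K$, and let $f:I\to I'$, $g:J\to J'$, $h:K\to K'$ be functions. Then $R_s(\langle\Lambda\rangle)\ge R_s(\langle(f\times g\times h)(\Lambda)\rangle)$.
   Context: For finite sets $I,J,K$ and $\Lambda\subseteq I\times J\times K$, $\langle\Lambda\rangle=\{((i,j),(j,k),(k,i))\in(I\times J)\times(J\times K)\times(K\times I): (i,j,k)\in\Lambda\}$. A tensor over $\mathbb{F}$ is a trilinear form $T=\sum t_{a,b,c}x_ay_bz_c$ with variables indexed by finite sets $A,B,C$; its support is $\{(a,b,c):t_{a,b,c}\neq0\}$; its rank $R(T)$ is the minimal number of products of three linear forms (one in each set of variables) summing to $T$. For $\Phi\subseteq A\times B\times C$, the support rank is $R_s(\Phi)=\min\{R(T):\operatorname{supp}(T)=\Phi\}$. *)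

(* Defs.v *)
From HB Require Import structures.
From mathcomp Require Import all_boot all_order all_algebra.
From mathcomp Require Import boolp.
Set Implicit Arguments. Unset Strict Implicit. Unset Printing Implicit Defensive.
Import GRing.Theory.
Local Open Scope ring_scope.

Section Tensors.
Variable F : fieldType.

(* A tensor with variables indexed by finite sets A, B, C is given by its
   coefficient function t : A -> B -> C -> F  (T = sum t_{abc} x_a y_b z_c). *)

Definition rank_le (A B C : finType) (T : A -> B -> C -> F) (r : nat) : Prop :=
  exists (u : 'I_r -> A -> F) (v : 'I_r -> B -> F) (w : 'I_r -> C -> F),
    forall a b c, T a b c = \sum_(l < r) u l a * v l b * w l c.

Definition supp (A B C : finType) (T : A -> B -> C -> F) : {set A * B * C} :=
  [set t | T t.1.1 t.1.2 t.2 != 0].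

Definition srank_le (A B C : finType) (Phi : {set A * B * C}) (r : nat) : Prop :=
  exists T : A -> B -> C -> F, supp T = Phi /\ rank_le T r.

Lemma srank_ex (A B C : finType) (Phi : {set A * B * C}) :
  exists r, `[< srank_le Phi r >].
Proof.
exists #|{: A * B}|; apply/asboolP.
pose T := fun (a : A) (b : B) (c : C) => (((a, b, c) \in Phi) : nat)%:R : F.
exists T; split.
  apply/setP => t; rewrite inE /T; case: t => [[a b] c] /=.
  by case: ((a, b, c) \in Phi); rewrite ?eqxx ?oner_neq0.
exists (fun l a => ((a == (enum_val l).1 : bool) : nat)%:R).
exists (fun l b => ((b == (enum_val l).2 : bool) : nat)%:R).
exists (fun l c => T (enum_val l).1 (enum_val l).2 c).
move=> a b c.
rewrite (reindex (@enum_rank (A * B)%type)) /=; last first.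
  by exists enum_val => x _; rewrite ?enum_rankK ?enum_valK.
rewrite (bigD1 (a, b)) //= big1 ?addr0; last first.
  case=> a' b' /=; rewrite enum_rankK /= => H.
  case: (eqVneq a a') => [Ea|Na]; last by rewrite !mul0r.
  case: (eqVneq b b') => [Eb|Nb]; last by rewrite mulr0 mul0r.
  by move: H; rewrite Ea Eb eqxx.
by rewrite enum_rankK /= !eqxx !mul1r.
Qed.

Definition support_rank (A B C : finType) (Phi : {set A * B * C}) : nat :=
  ex_minn (srank_ex Phi).

End Tensors.

Definition bracket (I J K : finType) (L : {set I * J * K})
  : {set (I * J) * (J * K) * (K * I)} :=
  [set (((t.1.1, t.1.2), (t.1.2, t.2)), (t.2, t.1.1)) | t in L].

Definition image3 (I J K I' J' K' : finType) (f : I -> I') (g : J -> J') (h : K -> K')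
  (L : {set I * J * K}) : {set I' * J' * K'} :=
  [set (f t.1.1, g t.1.2, h t.2) | t in L].

Definition infinite_type (T : eqType) : Prop := ~ exists s : seq T, forall x, x \in s.

(* Main.v *)
Require Import Defs.
From mathcomp Require Import all_boot all_order all_algebra.
From mathcomp Require Import ring boolp.
Set Implicit Arguments. Unset Strict Implicit. Unset Printing Implicit Defensive.
Import GRing.Theory.
Local Open Scope ring_scope.

Definition brg (I J K : finType) (t : I * J * K) : (I * J) * (J * K) * (K * I) :=
  (((t.1.1, t.1.2), (t.1.2, t.2)), (t.2, t.1.1)).

Arguments brg {I J K}.

Lemma bracketE (I J K : finType) (L : {set I * J * K}) : bracket L = brg @: L.
Proof. by []. Qed.

Lemma brg_inj (I J K : finType) : injective (@brg I J K).
Proof. by case=> [[i j] k] [[i' j'] k'] [-> -> _ -> _ _]. Qed.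

Lemma exists_nonroot (F : fieldType) (hF : infinite_type F) (P : {poly F}) :
  P != 0 -> exists x, ~~ root P x.
Proof.
move=> P0.
have ex : forall n, exists s : seq F, uniq s /\ size s = n.
  elim=> [|n [s [us ss]]]; first by exists [::].
  have : exists x, x \notin s.
    apply: contrapT => H; apply: hF; exists s => x.
    by apply/negPn/negP => Hx; apply: H; exists x.
  case=> x Hx; exists (x :: s); by rewrite /= Hx us ss.
have [s [us ss]] := ex (size P).
case Ha: (all (root P) s).
  by have := max_poly_roots P0 Ha us; rewrite ss ltnn.
move/negbT: Ha; rewrite -has_predC => /hasP [x _ Hx]; by exists x.
Qed.

Lemma sum3_mul (F : fieldType) (A B C : finType) (U : A -> F) (V : B -> F) (W : C -> F) :
  (\sum_a U a) * (\sum_b V b) * (\sum_c W c) =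
  \sum_a \sum_b \sum_c U a * V b * W c.
Proof.
rewrite big_distrlr /= mulr_suml; apply: eq_bigr => a _.
rewrite mulr_suml; apply: eq_bigr => b _.
by rewrite mulr_sumr.
Qed.

Section Main.
Variable F : fieldType.
Variables I J K I' J' K' : finType.
Variables (f : I -> I') (g : J -> J') (h : K -> K').
Variable L : {set I * J * K}.
Variable T : I * J -> J * K -> K * I -> F.

Definition img (t : I * J * K) : I' * J' * K' := (f t.1.1, g t.1.2, h t.2).
Definition NN := #|{: I * J}|.
Definition ea (a : I * J) : nat := enum_rank a.
Definition eb (b : J * K) : nat := (enum_rank b.2 * NN)%N.
Definition ee (t : I * J * K) : nat := (ea (t.1.1, t.1.2) + eb (t.1.2, t.2))%N.
Definition phi (a : I * J) : I' * J' := (f a.1, g a.2).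
Definition psi (b : J * K) : J' * K' := (g b.1, h b.2).
Definition chi (c : K * I) : K' * I' := (h c.1, f c.2).
Definition Tb (t : I * J * K) : F := T (t.1.1, t.1.2) (t.1.2, t.2) (t.2, t.1.1).

Definition Tp (x : F) (a' : I' * J') (b' : J' * K') (c' : K' * I') : F :=
  \sum_a \sum_b \sum_c
    (if [&& phi a == a', psi b == b' & chi c == c']
     then x ^+ ea a * x ^+ eb b * T a b c else 0).

Definition pp (t' : I' * J' * K') : {poly F} :=
  \sum_(t in L) (if img t == t' then Tb t else 0) *: 'X^(ee t).

Lemma ee_inj : injective ee.
Proof.
case=> [[i j] k] [[i' j'] k']; rewrite /ee /ea /eb /= => E.
have lt1 : (enum_rank (i, j) < NN)%N by apply: ltn_ord.
have lt2 : (enum_rank (i', j') < NN)%N by apply: ltn_ord.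
have E1 : (enum_rank (i, j) : nat) = enum_rank (i', j').
  have := congr1 (modn^~ NN) E.
  by rewrite ![(_ + _ * _)%N]addnC !modnMDl !modn_small.
have N0 : (0 < NN)%N by apply: leq_ltn_trans lt1.
have E2 : (enum_rank k : nat) = enum_rank k'.
  have := congr1 (divn^~ NN) E.
  by rewrite ![(_ + _ * _)%N]addnC !divnMDl // !divn_small // !addn0.
move/ord_inj/enum_rank_inj: E1 => [-> ->].
by move/ord_inj/enum_rank_inj: E2 => ->.
Qed.

Lemma rank_Tp x r : rank_le T r -> rank_le (Tp x) r.
Proof.
case=> u [v [w HT]].
exists (fun l a' => \sum_a (if phi a == a' then x ^+ ea a * u l a else 0)).
exists (fun l b' => \sum_b (if psi b == b' then x ^+ eb b * v l b else 0)).
exists (fun l c' => \sum_c (if chi c == c' then w l c else 0)).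
move=> a' b' c'; rewrite /Tp /=.
apply/esym; under eq_bigr => l _ do rewrite sum3_mul.
rewrite exchange_big; apply: eq_bigr => a _.
rewrite exchange_big; apply: eq_bigr => b _.
rewrite exchange_big; apply: eq_bigr => c _.
rewrite HT.
case: (phi a == a'); case: (psi b == b'); case: (chi c == c') => /=;
  try by rewrite big1 // => l _; rewrite !(mulr0, mul0r).
by rewrite mulr_sumr; apply: eq_bigr => l _; ring.
Qed.

Hypothesis HT : supp T = bracket L.

Lemma Tb_neq0 t : (Tb t != 0) = (t \in L).
Proof.
have : (brg t \in supp T) = (brg t \in bracket L) by rewrite HT.
rewrite bracketE mem_imset; last exact: brg_inj.
by rewrite inE.
Qed.

Lemma T_zero a b c : (a, b, c) \notin bracket L -> T a b c = 0.
Proof.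
by rewrite -HT inE /= negbK => /eqP.
Qed.

Lemma TpE x a' b' c' : Tp x a' b' c' =
  \sum_(t in L) (if [&& phi (t.1.1, t.1.2) == a', psi (t.1.2, t.2) == b'
                      & chi (t.2, t.1.1) == c'] then x ^+ ee t * Tb t else 0).
Proof.
rewrite /Tp pair_bigA /= pair_bigA /=.
rewrite (bigID (mem (bracket L))) /= [X in _ + X]big1 ?addr0; last first.
  move=> [[a b] c] /= Hn; rewrite T_zero //; by case: ifP; rewrite ?mulr0.
rewrite bracketE big_imset /=; last by move=> ? ? _ _; apply: brg_inj.
apply: eq_bigr => t _; by rewrite /ee exprD.
Qed.

Lemma cond_img t t' :
  [&& phi (t.1.1, t.1.2) == (brg t').1.1, psi (t.1.2, t.2) == (brg t').1.2
    & chi (t.2, t.1.1) == (brg t').2] = (img t == t').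
Proof.
case: t => [[i j] k]; case: t' => [[i' j'] k'].
rewrite /phi /psi /chi /img /brg /= !xpair_eqE.
by case: (f i == i'); case: (g j == j'); case: (h k == k').
Qed.

Lemma pp_neq0 t' : t' \in img @: L -> pp t' != 0.
Proof.
case/imsetP => t0 Ht0 ->; apply/eqP => H.
have := congr1 (fun q : {poly F} => q`_(ee t0)) H.
rewrite coef0 coef_sum (bigD1 t0) //= big1.
  rewrite coefZ coefXn !eqxx mulr1 addr0 => /eqP.
  by apply/negP; rewrite Tb_neq0.
move=> t /andP [_ Ht]; rewrite coefZ coefXn.
case: (ee t0 =P ee t) => [E|]; last by rewrite /= ?mulr0n mulr0.
have E' : t0 = t by apply: ee_inj.
by rewrite E' eqxx in Ht.
Qed.

Lemma good_x : infinite_type F ->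
  exists x, forall t', t' \in img @: L -> (pp t').[x] != 0.
Proof.
move=> hF.
have P0 : \prod_(t' in img @: L) pp t' != 0.
  by apply/prodf_neq0 => t' Ht'; apply: pp_neq0.
have [x Hx] := exists_nonroot hF P0.
exists x; move: Hx; rewrite /root horner_prod => /prodf_neq0 H t' Ht'.
exact: H.
Qed.

Lemma supp_Tp x : (forall t', t' \in img @: L -> (pp t').[x] != 0) ->
  supp (Tp x) = bracket (image3 f g h L).
Proof.
move=> Hx; apply/setP => [[[a' b'] c']]; rewrite inE /= TpE.
have E3 : image3 f g h L = img @: L by [].
case: (boolP ((a', b', c') \in bracket (image3 f g h L))) => Hin.
  move: Hin; rewrite bracketE E3 => /imsetP [t' Ht' E].
  have -> : a' = (brg t').1.1 by rewrite -E.
  have -> : b' = (brg t').1.2 by rewrite -E.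
  have -> : c' = (brg t').2 by rewrite -E.
  under eq_bigr => t _ do rewrite cond_img.
  apply/negP => /eqP HS; move/negP: (Hx t' Ht'); apply; apply/eqP.
  rewrite -[RHS]HS /pp horner_sum; apply: eq_bigr => t _.
  by rewrite hornerZ hornerXn; case: ifP => _; rewrite ?mul0r // mulrC.
apply/negbTE; rewrite negbK; apply/eqP.
apply: big1 => t Ht; case: ifP => // Hc; exfalso.
move/negP: Hin; apply; rewrite bracketE E3; apply/imsetP; exists (img t).
  by apply/imsetP; exists t.
by move: Hc => /and3P [/eqP <- /eqP <- /eqP <-].
Qed.

End Main.

Theorem corollary4p3 (F : fieldType) (hF : infinite_type F)
  (I J K I' J' K' : finType) (L : {set I * J * K})
  (f : I -> I') (g : J -> J') (h : K -> K') :
  (support_rank F (bracket (image3 f g h L)) <= support_rank F (bracket L))%N.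
Proof.
rewrite /support_rank.
case: (ex_minnP (srank_ex F (bracket L))) => r /asboolP [T [HsT HrT]] _.
case: ex_minnP => r' _; apply; apply/asboolP.
have [x Hx] := good_x f g h HsT hF.
exists (Tp f g h T x); split; first exact: supp_Tp.
exact: rank_Tp.
Qed.
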